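(* Let $\tau$ be a primitive substitution and $u$ a non-empty prefix of $X_\tau$. Then $\tau$ and $\tau_u$ have the same eigenvalues except perhaps $0$ and roots of unity: a complex number which is neither $0$ nor a root of unity is an eigenvalue of $M_\tau$ if and only if it is an eigenvalue of $M_{\tau_u}$.
   Context: A substitution is a triple $(\tau,A,a)$: $A$ a finite alphabet, $\tau:A\to A^+$ a morphism (extended by concatenation), $a\in A$ with $\tau(a)$ starting with $a$; its fixed point $X_\tau$ is the unique sequence starting with $a$ with $\tau(X_\tau)=X_\tau$. Its matrix $M_\tau$ has $(i,j)$ entry the number of occurrences of $i$ in $\tau(j)$. $\tau$ is primitive if some power of $M_\tau$ is positive; then $X_\tau$ is uniformly recurrent. For a non-empty prefix $u$ of $X_\tau$, a return word on $u$ is a factor $X_{[i,j-1]}$ where $i<j$ are successive occurrences of $u$; there are finitely many, and $X_\tau$ factors uniquely as a concatenation of return words. Enumerating return words in order of first appearance gives a bijection $\Theta_u$ from $R_u=\{1,\dots,N\}$ to the return words, extended to an injective morphism $R_u^*\to A^*$. The return substitution $\tau_u:R_u\to R_u^+$ is the unique morphism with $\Theta_u\tau_u=\tau\Theta_u$. *)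

(* Defs.v *)
From mathcomp Require Import all_boot all_order all_algebra all_field.
Set Implicit Arguments. Unset Strict Implicit. Unset Printing Implicit Defensive.
Import GRing.Theory Num.Theory.
Local Open Scope ring_scope.

Definition subst_word (A B : Type) (tau : A -> seq B) (w : seq A) : seq B :=
  flatten (map tau w).

Definition subst_mx (A : finType) (tau : A -> seq A) : 'M[algC]_(#|A|) :=
  \matrix_(i, j) ((count_mem (enum_val i) (tau (enum_val j)))%:R : algC).

Definition primitive (A : finType) (tau : A -> seq A) : Prop :=
  exists k : nat, forall i j, 0 < ((subst_mx tau) ^+ k) i j.

Definition pref (A : Type) (X : nat -> A) (n : nat) : seq A := mkseq X n.

(* X is a fixed point of tau starting with a: X_0 = a and tau(X) = X,
   i.e. tau of every prefix of X is again a prefix of X. *)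
Definition is_fixed_point (A : Type) (tau : A -> seq A) (a : A) (X : nat -> A)
  : Prop :=
  X 0%N = a /\
  forall n, subst_word tau (pref X n) = pref X (size (subst_word tau (pref X n))).

Definition factor (A : Type) (X : nat -> A) (i n : nat) : seq A :=
  mkseq (fun k => X (i + k)%N) n.

Definition occurs_at (A : Type) (X : nat -> A) (u : seq A) (i : nat) : Prop :=
  factor X i (size u) = u.

Definition return_word_at (A : Type) (X : nat -> A) (u : seq A) (i : nat)
  (w : seq A) : Prop :=
  occurs_at X u i /\
  exists j, [/\ (i < j)%N, occurs_at X u j,
     (forall k, (i < k < j)%N -> ~ occurs_at X u k) & w = factor X i (j - i)].

Definition is_return_word (A : Type) (X : nat -> A) (u : seq A) (w : seq A)
  : Prop := exists i, return_word_at X u i w.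

(* Theta : 'I_N -> seq A enumerates (bijectively) the return words on u,
   in order of first appearance in X. *)
Definition return_enumeration (A : Type) (X : nat -> A) (u : seq A) (N : nat)
  (Theta : 'I_N -> seq A) : Prop :=
  [/\ forall k, is_return_word X u (Theta k),
      forall w, is_return_word X u w -> exists k, Theta k = w,
      injective Theta &
      forall k l : 'I_N, (k < l)%N -> forall i, return_word_at X u i (Theta l) ->
         exists2 i', (i' < i)%N & return_word_at X u i' (Theta k)].

Definition return_substitution (A : Type) (tau : A -> seq A) (N : nat)
  (Theta : 'I_N -> seq A) (tau_u : 'I_N -> seq 'I_N) : Prop :=
  forall k, tau_u k != [::] /\
            subst_word Theta (tau_u k) = subst_word tau (Theta k).

Definition is_root_of_unity (x : algC) : Prop := exists n : nat, (0 < n)%N /\ x ^+ n = 1.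

(* Main.v *)
Require Import Defs.
From mathcomp Require Import all_boot all_order all_algebra all_field.
Set Implicit Arguments. Unset Strict Implicit. Unset Printing Implicit Defensive.
Import GRing.Theory Num.Theory.
Local Open Scope ring_scope.

Definition decm (C p q : nat) (T : 'M['I_(C.*2.+1)]_(p,q)) : 'M[algC]_(p,q) :=
  map_mx (fun t : 'I_(C.*2.+1) => (t : nat)%:R - C%:R) T.

Lemma pow_eig (p : nat) (P : 'M[algC]_p) (x : 'rV_p) lam n :
  x *m P = lam *: x -> x *m P ^+ n = lam ^+ n *: x.
Proof.
move=> xP; elim: n => [|n IH]; first by rewrite expr0 mulmx1 scale1r.
by rewrite exprSr mulmxA IH -scalemxAl xP scalerA exprSr.
Qed.

Lemma key (p q : nat) (P : 'M[algC]_p) (Q : 'M[algC]_q) (L : 'M[algC]_(p,q))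
  (C : nat) (lam : algC) :
  lam != 0 -> ~ is_root_of_unity lam ->
  P *m L = L *m Q ->
  (forall n, exists G : 'M_(q,p), exists T : 'M['I_(C.*2.+1)]_p,
      P ^+ n = L *m G + decm T) ->
  eigenvalue P lam -> eigenvalue Q lam.
Proof.
move=> lam0 nroot PL Hn /eigenvalueP [x xP x0].
case: (eqVneq (x *m L) 0) => [xL0|xLn0]; last first.
  apply/eigenvalueP; exists (x *m L) => //.
  by rewrite -mulmxA -PL mulmxA xP -scalemxAl.
exfalso.
have H n : exists T : 'M['I_(C.*2.+1)]_p, lam ^+ n *: x == x *m decm T.
  have [G [T E]] := Hn n; exists T.
  by rewrite -(pow_eig n xP) E mulmxDr mulmxA xL0 mul0mx add0r.
pose K := #|{: 'M['I_(C.*2.+1)]_p}|.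
pose f := fun n : 'I_K.+1 =>
  odflt (const_mx (ord0 : 'I_(C.*2).+1)) [pick T | lam ^+ n *: x == x *m decm T].
have fP (n : 'I_K.+1) : lam ^+ n *: x = x *m decm (f n).
  rewrite /f; case: pickP => [T /eqP //|/= H0].
  by have [T HT] := H n; move: (H0 T); rewrite HT.
have : ~~ injectiveb f.
  apply/negP => /injectiveP /leq_card; rewrite card_ord.
  have -> : #|{: 'M['I_(C.*2.+1)]_p}| = K by [].
  by rewrite ltnn.
move=> /injectivePn [n [m nm fnm]].
have E : lam ^+ n = lam ^+ m.
  apply/eqP; rewrite -subr_eq0; apply/eqP.
  have : (lam ^+ n - lam ^+ m) *: x = 0 by rewrite scalerBl !fP fnm subrr.
  by move/eqP; rewrite scaler_eq0 (negbTE x0) orbF => /eqP.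
apply: nroot.
have Hlt : forall n m : nat, (n < m)%N -> lam ^+ n = lam ^+ m -> is_root_of_unity lam.
  move=> n0 m0 lt E0; exists (m0 - n0)%N; split; first by rewrite subn_gt0.
  apply: (mulfI (expf_neq0 n0 lam0)); rewrite -exprD subnKC; last exact: ltnW.
  by rewrite E0 mulr1.
case: (ltngtP n m) => [lt|lt|eq]; first exact: Hlt lt E.
  exact: Hlt lt (esym E).
by move: nm; rewrite (val_inj eq) eqxx.
Qed.
From mathcomp Require Import zify ring.
Lemma sw_cat (B C : Type) (f : B -> seq C) w1 w2 :
  subst_word f (w1 ++ w2) = subst_word f w1 ++ subst_word f w2.
Proof. by rewrite /subst_word map_cat flatten_cat. Qed.

Lemma sw_cons (B C : Type) (f : B -> seq C) x w :
  subst_word f (x :: w) = f x ++ subst_word f w.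
Proof. by []. Qed.

Lemma sw1 (B C : Type) (f : B -> seq C) x : subst_word f [:: x] = f x.
Proof. by rewrite /subst_word /= cats0. Qed.

Lemma iter_sw_cat (B : Type) (f : B -> seq B) n w1 w2 :
  iter n (subst_word f) (w1 ++ w2) =
  iter n (subst_word f) w1 ++ iter n (subst_word f) w2.
Proof. by elim: n => //= n ->; rewrite sw_cat. Qed.

Lemma size_sw (B : eqType) (f : B -> seq B) w :
  (forall b, f b != [::]) -> (size w <= size (subst_word f w))%N.
Proof.
move=> nf; elim: w => //= x w IH; rewrite sw_cons size_cat.
by rewrite -add1n leq_add // lt0n size_eq0.
Qed.

Lemma size_iter_sw (B : eqType) (f : B -> seq B) n w :
  (forall b, f b != [::]) -> (size w <= size (iter n (subst_word f) w))%N.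
Proof.
move=> nf; elim: n => //= n IH; exact: leq_trans IH (size_sw _ nf).
Qed.

Lemma sumw (B : finType) (g : B -> algC) (w : seq B) :
  \sum_(y <- w) g y =
  \sum_(i < #|B|) (count_mem (enum_val i) w)%:R * g (enum_val i).
Proof.
elim: w => [|y w IH]; first by rewrite big_nil big1 // => i _; rewrite mul0r.
rewrite big_cons IH /=.
under [RHS]eq_bigr => i _ do rewrite natrD mulrDl.
rewrite big_split /=; congr (_ + _).
rewrite (bigD1 (enum_rank y)) //= enum_rankK eqxx mul1r big1 ?addr0 //.
move=> i ne; case: eqP => [E|]; last by rewrite mul0r.
by move: ne; rewrite E enum_valK eqxx.
Qed.

Lemma count_sw (B C : eqType) (f : B -> seq C) w x :
  count_mem x (subst_word f w) = (\sum_(y <- w) count_mem x (f y))%N.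
Proof.
elim: w => [|y w IH]; first by rewrite big_nil.
by rewrite sw_cons count_cat IH big_cons.
Qed.

Lemma iter_sw_nil (B : Type) (f : B -> seq B) n : iter n (subst_word f) [::] = [::].
Proof. by elim: n => //= n ->. Qed.

Lemma count_iter_sw (B : eqType) (f : B -> seq B) n w x :
  count_mem x (iter n (subst_word f) w) =
  (\sum_(y <- w) count_mem x (iter n (subst_word f) [:: y]))%N.
Proof.
elim: w => [|y w IH]; first by rewrite big_nil iter_sw_nil.
by rewrite -cat1s iter_sw_cat count_cat IH big_cons.
Qed.

Lemma natr_sum_seq (B : Type) (w : seq B) (F : B -> nat) :
  ((\sum_(y <- w) F y)%N)%:R = \sum_(y <- w) (F y)%:R :> algC.
Proof. by rewrite natr_sum. Qed.

Lemma mxpow (B : finType) (f : B -> seq B) n i j :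
  (subst_mx f ^+ n) i j = (count_mem (enum_val i) (iter n (subst_word f) [:: enum_val j]))%:R.
Proof.
elim: n i j => [|n IH] i j.
  rewrite expr0 mxE /= addn0 eq_sym (inj_eq enum_val_inj).
  by case: eqP.
rewrite exprSr -mulmxE mxE.
under eq_bigr => k _ do rewrite IH mxE.
rewrite iterSr sw1 count_iter_sw natr_sum [RHS]sumw.
by apply: eq_bigr => k _; rewrite mulrC.
Qed.

Lemma mxmul_sw (B C D : finType) (f : C -> seq D) (g : B -> seq C) (L : 'M[algC]_(#|D|, #|C|)) i (j : 'I_#|B|) :
  (forall i k, L i k = (count_mem (enum_val i) (f (enum_val k)))%:R) ->
  \sum_k L i k * (count_mem (enum_val k) (g (enum_val j)))%:R =
  (count_mem (enum_val i) (subst_word f (g (enum_val j))))%:R.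
Proof.
move=> HL; rewrite count_sw natr_sum [RHS]sumw.
by apply: eq_bigr => k _; rewrite HL mulrC.
Qed.
Section Main.
Variables (A : finType) (tau : A -> seq A) (a : A) (X : nat -> A)
  (u : seq A) (N : nat) (Theta : 'I_N -> seq A).
Hypothesis Hne : forall b, tau b != [::].
Hypothesis Ha : exists w, tau a = a :: w.
Hypothesis Hprim : primitive tau.
Hypothesis Hfix : is_fixed_point tau a X.
Hypothesis Hu0 : u != [::].
Hypothesis Hu : u = pref X (size u).
Hypothesis Henum : return_enumeration X u Theta.

Local Notation sw := (subst_word tau).
Definition Qn n q := size (iter n sw (pref X q)).

Lemma pref_factor m : pref X m = factor X 0 m.
Proof. by apply: eq_mkseq => k; rewrite add0n. Qed.

Lemma factor_add i m k : factor X i (m + k) = factor X i m ++ factor X (i + m) k.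
Proof.
rewrite /factor /mkseq iotaD map_cat; congr (_ ++ _).
have -> : iota (0 + m) k = map (addn m) (iota 0 k) by rewrite -iotaDl addn0.
by rewrite -map_comp; apply: eq_map => t /=; rewrite addnA.
Qed.

Lemma size_factor i m : size (factor X i m) = m.
Proof. exact: size_mkseq. Qed.

Lemma take_factor i m k : (k <= m)%N -> take k (factor X i m) = factor X i k.
Proof.
move=> km; rewrite -(subnKC km) factor_add take_size_cat //; exact: size_factor.
Qed.

Lemma factor1 i : factor X i 1 = [:: X i].
Proof. by rewrite /factor /mkseq /= addn0. Qed.

Lemma nth_factor x0 i m t : (t < m)%N -> nth x0 (factor X i m) t = X (i + t).
Proof. by move=> tm; rewrite nth_mkseq. Qed.

Lemma fixn n m : iter n sw (pref X m) = pref X (Qn n m).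
Proof.
elim: n => [|n IH]; first by rewrite /Qn /= size_mkseq.
rewrite /Qn /= IH; case: Hfix => _ H; exact: H.
Qed.

Lemma Qn_mono n q m : Qn n (q + m) = (Qn n q + size (iter n sw (factor X q m)))%N.
Proof.
by rewrite /Qn !pref_factor factor_add iter_sw_cat size_cat add0n.
Qed.

Lemma factor_iter n q m :
  iter n sw (factor X q m) = factor X (Qn n q) (size (iter n sw (factor X q m))).
Proof.
have E := fixn n (q + m).
rewrite [in LHS]pref_factor factor_add add0n iter_sw_cat fixn in E.
move: E; rewrite Qn_mono pref_factor [in X in _ = X]pref_factor factor_add add0n.
by move/eqP; rewrite eqseq_cat ?size_factor // eqxx /= => /eqP.
Qed.

Lemma Qn_ge n q : (q <= Qn n q)%N.
Proof. by rewrite /Qn; apply: leq_trans (size_iter_sw _ _ Hne); rewrite size_mkseq. Qed.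

Lemma pref1 : pref X 1 = [:: a].
Proof. by rewrite /pref /mkseq /=; case: Hfix => ->. Qed.

Definition occ j := factor X j (size u) == u.

Lemma occ0 : occ 0.
Proof. by rewrite /occ -pref_factor -Hu. Qed.

Lemma occ_Qn n q : occ q -> occ (Qn n q).
Proof.
rewrite /occ => /eqP oq.
have E := factor_iter n q (size u); rewrite oq in E.
have Hs : (size u <= size (iter n sw u))%N by exact: size_iter_sw.
rewrite -(take_factor _ Hs) -E.
have -> : iter n sw u = pref X (Qn n (size u)) by rewrite -fixn -Hu.
rewrite pref_factor take_factor -?pref_factor -?Hu //.
by rewrite /Qn -Hu; exact: size_iter_sw.
Qed.

Lemma posk : exists k, forall x y : A, x \in iter k sw [:: y].
Proof.
case: Hprim => k Hk; exists k => x y.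
have := Hk (enum_rank x) (enum_rank y).
by rewrite mxpow !enum_rankK ltr0n -has_count has_pred1.
Qed.

Lemma letter_occ b : exists q, X q = b.
Proof.
have [k Hk] := posk; have := Hk b a.
by rewrite -pref1 fixn => /mapP [q _ ->]; exists q.
Qed.

Lemma a_far i : exists q, (i <= q)%N /\ X q = a.
Proof.
have [k Hk] := posk; have := Hk a (X i).
rewrite -factor1 factor_iter => /(nthP a) [t tlt Ht].
rewrite size_factor in tlt; rewrite nth_factor // in Ht.
exists (Qn k i + t)%N; split => //.
exact: leq_trans (Qn_ge k i) (leq_addr _ _).
Qed.

Lemma Rec i : exists j, (i < j)%N && occ j.
Proof.
have [w Hw] := Ha; case: w Hw => [|c w] Hw.
  have allA : forall x : A, x = a.
    have [k Hk] := posk => x; have := Hk x a.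
    have -> : iter k sw [:: a] = [:: a].
      by elim: k {Hk} => //= k ->; rewrite sw1 Hw.
    by rewrite mem_seq1 => /eqP.
  exists i.+1; rewrite ltnSn /occ; apply/eqP; rewrite [RHS]Hu.
  by apply: eq_mkseq => t; rewrite (allA (X _)) (allA (X t)).
have grow p : (p.+1 <= size (iter p sw [:: a]))%N.
  elim: p => // p IH.
  rewrite iterSr sw1 Hw -cat1s iter_sw_cat size_cat -addn1 leq_add //.
  by apply: leq_trans (size_iter_sw _ _ Hne).
have [q [iq Xq]] := a_far i.+1.
exists (Qn (size u) q); apply/andP; split.
  exact: leq_trans iq (Qn_ge _ _).
have E := factor_iter (size u) q 1.
rewrite factor1 Xq in E.
have Hs : (size u <= size (iter (size u) sw [:: a]))%N by apply: ltnW.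
rewrite /occ -(take_factor _ Hs) -E -pref1 fixn pref_factor take_factor.
  by rewrite -pref_factor -Hu.
by rewrite /Qn pref1.
Qed.

Definition nxt i := ex_minn (Rec i).

Lemma nxt_spec i : [/\ (i < nxt i)%N, occ (nxt i) &
  forall j, (i < j)%N -> occ j -> (nxt i <= j)%N].
Proof.
rewrite /nxt; case: ex_minnP => j /andP [ij oj] H; split => // k ik ok.
by apply: H; rewrite ik.
Qed.

Lemma nxt_gt i : (i < nxt i)%N. Proof. by case: (nxt_spec i). Qed.
Lemma nxt_occ i : occ (nxt i). Proof. by case: (nxt_spec i). Qed.
Lemma nxt_min i j : (i < j)%N -> occ j -> (nxt i <= j)%N.
Proof. by case: (nxt_spec i) => _ _; apply. Qed.
Lemma nxt_none i t : (i < t < nxt i)%N -> ~~ occ t.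
Proof.
case/andP=> it tn; apply/negP => ot; have := nxt_min it ot.
by rewrite leqNgt tn.
Qed.
Lemma nxt_eq i j : (i < j)%N -> occ j -> (forall t, (i < t < j)%N -> ~~ occ t) ->
  nxt i = j.
Proof.
move=> ij oj H; apply/eqP; rewrite eqn_leq nxt_min //=.
rewrite leqNgt; apply/negP => lt; have := H (nxt i).
by rewrite nxt_gt lt nxt_occ => /(_ isT).
Qed.

Lemma rw_at i : occ i -> exists l, Theta l = factor X i (nxt i - i).
Proof.
move=> oi; case: Henum => _ Hall _ _; apply: Hall; exists i; split.
  exact/eqP.
exists (nxt i); split; [exact: nxt_gt | apply/eqP; exact: nxt_occ | | by []].
by move=> k /nxt_none /negP H E; apply: H; apply/eqP.
Qed.

Lemma ret_nxt l : exists i, occ i /\ Theta l = factor X i (nxt i - i).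
Proof.
case: Henum => Hret _ _ _; have [i [oi [j [ij oj none E]]]] := Hret l.
exists i; split; first exact/eqP.
rewrite E (@nxt_eq i j) //; first exact/eqP.
by move=> t /none H; apply/negP => /eqP.
Qed.

Definition typ j l := Theta l == factor X j (nxt j - j).

Lemma typ_uniq j l l' : typ j l -> typ j l' -> l = l'.
Proof.
case: Henum => _ _ Hinj _; rewrite /typ => /eqP E /eqP E'.
by apply: Hinj; rewrite E E'.
Qed.

Definition R := (\max_(l : 'I_N) size (Theta l))%N.

Lemma gap_le i : occ i -> (nxt i - i <= R)%N.
Proof.
move=> /rw_at [l E]; rewrite -(size_factor i (nxt i - i)) -E.
exact: (leq_bigmax l).
Qed.

Definition cnt i l := count (fun j => occ j && typ j l) (iota 0 i).
Definition Count s m l := count (fun t => occ (s + t) && typ (s + t) l) (iota 0 m).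

Lemma cnt_add s m l : cnt (s + m) l = (cnt s l + Count s m l)%N.
Proof.
rewrite /cnt /Count iotaD count_cat add0n; congr (_ + _)%N.
by rewrite -[s in iota s _]addn0 iotaDl count_map.
Qed.

Lemma Count_nxt o l : occ o -> Count o (nxt o - o) l = typ o l.
Proof.
move=> oo; have : (0 < nxt o - o)%N by rewrite subn_gt0 nxt_gt.
case E: (nxt o - o)%N => [|d] // _.
rewrite /Count /= addn0 oo /=.
rewrite (@eq_in_count _ _ pred0); first by rewrite count_pred0 addn0.
move=> t; rewrite mem_iota /= => /andP [t1 td].
suff : ~~ occ (o + t) by move/negbTE => ->.
apply: (@nxt_none o); apply/andP; split; lia.
Qed.

Lemma lo_ex i : exists j, (j <= i)%N && occ j.
Proof. by exists 0%N; rewrite leq0n occ0. Qed.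
Lemma lo_ub i : forall j, (j <= i)%N && occ j -> (j <= i)%N.
Proof. by move=> j /andP []. Qed.
Definition lo i := ex_maxn (lo_ex i) (@lo_ub i).

Lemma lo_spec i : [/\ (lo i <= i)%N, occ (lo i) & (i < nxt (lo i))%N].
Proof.
rewrite /lo; case: ex_maxnP => j /andP [ji oj] H; split => //.
rewrite ltnNge; apply/negP => ni.
have := H _ (introT andP (conj ni (nxt_occ j))).
by rewrite leqNgt nxt_gt.
Qed.

Lemma pref_occ o : occ o -> forall c,
  count_mem c (pref X o) = (\sum_(l : 'I_N) cnt o l * count_mem c (Theta l))%N.
Proof.
elim/ltn_ind: o => o IH oo c.
case: o IH oo => [|o] IH oo.
  by rewrite big1 // => l _; rewrite /cnt /=.
have [plo op ltn] := lo_spec o.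
set p := lo o in plo op ltn.
have np : nxt p = o.+1.
  apply/eqP; rewrite eqn_leq ltn andbT nxt_min //.
have Ho : o.+1 = (p + (o.+1 - p))%N by rewrite subnKC // ltnW.
rewrite Ho pref_factor factor_add add0n -pref_factor count_cat IH //.
under [in RHS]eq_bigr => l _ do rewrite cnt_add -np Count_nxt // mulnDl.
rewrite big_split /=; congr (_ + _)%N.
have [l0 E0] := rw_at op.
rewrite np in E0; rewrite -E0 (bigD1 l0) //= big1 ?addn0.
  by rewrite /typ np E0 eqxx mul1n.
move=> l ne; case T: (typ p l) => //.
by move: ne; rewrite (@typ_uniq p l l0 T) ?eqxx // /typ np E0 eqxx.
Qed.

Lemma pref_split i c : count_mem c (pref X i) =
  (count_mem c (pref X (lo i)) + count_mem c (factor X (lo i) (i - lo i)))%N.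
Proof.
have [li _ _] := lo_spec i.
by rewrite {1}(pref_factor i) -{1}(subnKC li) factor_add -pref_factor add0n count_cat.
Qed.

Lemma r_le i c : (count_mem c (factor X (lo i) (i - lo i)) <= R)%N.
Proof.
have [li ol ni] := lo_spec i.
apply: leq_trans (count_size _ _) _; rewrite size_factor.
apply: leq_trans (gap_le ol); lia.
Qed.

Lemma qpos_ex b : exists q, X q == b.
Proof. by have [q E] := letter_occ b; exists q; rewrite E. Qed.
Definition qpos b := ex_minn (qpos_ex b).
Lemma qposE b : X (qpos b) = b.
Proof. by rewrite /qpos; case: ex_minnP => q /eqP. Qed.

Lemma iter_win n q c : count_mem c (iter n sw [:: X q]) =
  (count_mem c (pref X (Qn n q.+1)) - count_mem c (pref X (Qn n q)))%N.
Proof.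
have := Qn_mono n q 1; rewrite factor1 addn1 => ->.
rewrite pref_factor factor_add -factor1 -factor_iter count_cat.
by rewrite -pref_factor addKn.
Qed.

Definition Lmx : 'M[algC]_(#|A|, #|'I_N|) :=
  \matrix_(c, k) (count_mem (enum_val c) (Theta (enum_val k)))%:R.

Lemma sumN (F : 'I_N -> algC) : \sum_(k < #|'I_N|) F (enum_val k) = \sum_(l : 'I_N) F l.
Proof. by rewrite -big_enum_val. Qed.

Lemma forward n : exists G : 'M[algC]_(#|'I_N|, #|A|),
  exists T : 'M['I_(R.*2.+1)]_#|A|, subst_mx tau ^+ n = Lmx *m G + decm T.
Proof.
pose s (j : 'I_#|A|) := Qn n (qpos (enum_val j)); pose e (j : 'I_#|A|) := Qn n (qpos (enum_val j)).+1.
pose r i c := count_mem c (factor X (lo i) (i - lo i)).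
exists (\matrix_(k, j) ((cnt (lo (e j)) (enum_val k))%:R - (cnt (lo (s j)) (enum_val k))%:R)).
exists (\matrix_(c, j) inord (r (e j) (enum_val c) + R - r (s j) (enum_val c))).
apply/matrixP => c j; rewrite mxpow !mxE.
have H := iter_win n (qpos (enum_val j)) (enum_val c); rewrite qposE in H; rewrite H.
rewrite -/(s j) -/(e j).
have le_se : (count_mem (enum_val c) (pref X (s j)) <= count_mem (enum_val c) (pref X (e j)))%N.
  rewrite /s /e -addn1 Qn_mono !pref_factor factor_add count_cat.
  exact: leq_addr.
rewrite natrB //.
have [_ ose _] := lo_spec (s j); have [_ oee _] := lo_spec (e j).
rewrite (pref_split (s j)) (pref_split (e j)) !pref_occ //.
rewrite -/(r (s j) _) -/(r (e j) _).
have rs := r_le (s j) (enum_val c); have re := r_le (e j) (enum_val c).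
rewrite inordK; last by rewrite ltnS -addnn; apply: leq_trans (leq_subr _ _) _; exact: leq_add re (leqnn R).
rewrite natrB; last exact: leq_trans rs (leq_addl _ _).
rewrite /Lmx.
set LL := (X in X = _) .
erewrite eq_bigr; last first.
  move=> k _; rewrite !mxE mulrBr; reflexivity.
rewrite sumrB.
rewrite (sumN (fun l => (count_mem (enum_val c) (Theta l))%:R * (cnt (lo (e j)) l)%:R)).
rewrite (sumN (fun l => (count_mem (enum_val c) (Theta l))%:R * (cnt (lo (s j)) l)%:R)).
rewrite /LL !natrD !natr_sum.
have E1 : forall f g : 'I_N -> nat, \sum_i ((f i * g i)%N%:R : algC) = \sum_i (g i)%:R * (f i)%:R.
  by move=> f g; apply: eq_bigr => l _; rewrite natrM mulrC.
rewrite !E1; ring.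
Qed.

Lemma SUBF s s' m t k : factor X s m = factor X s' m -> (t + k <= m)%N ->
  factor X (s + t) k = factor X (s' + t) k.
Proof.
move=> E tk; have := congr1 (take (t + k)) E; rewrite !take_factor //.
rewrite !factor_add => /eqP; rewrite eqseq_cat ?size_factor // => /andP [_ /eqP] //.
Qed.

Lemma occ_from_rw l s : Theta l = factor X s (size (Theta l)) ->
  occ (s + size (Theta l)) -> occ s /\ nxt s = (s + size (Theta l))%N.
Proof.
move=> Es os.
have [i [oi Ei]] := ret_nxt l.
have ni := nxt_gt i.
have Hd : size (Theta l) = (nxt i - i)%N by rewrite Ei size_factor.
have F : factor X s (size (Theta l) + size u) = factor X i (size (Theta l) + size u).
  rewrite !factor_add -Es; congr (_ ++ _); last first.
  have o1 : factor X (s + size (Theta l)) (size u) = u by apply/eqP.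
  have o2 : factor X (i + size (Theta l)) (size u) = u.
    by rewrite Hd subnKC ?(ltnW ni) //; apply/eqP; exact: nxt_occ.
  by rewrite o1 o2.
  by rewrite Hd -Ei.
split.
  rewrite /occ; have := @SUBF s i _ 0%N (size u) F; rewrite !addn0 => ->; [exact: oi | exact: leq_addl].
apply: nxt_eq => //.
  by rewrite -{1}[s]addn0 ltn_add2l Hd subn_gt0.
move=> t /andP [st ts]; have := @SUBF s i _ (t - s)%N (size u) F.
rewrite subnKC ?(ltnW st) // => H; rewrite /occ H.
  have := @nxt_none i (i + (t - s)); rewrite /occ => -> //.
  apply/andP; split; first by lia.
  by move: ts; rewrite Hd; lia.
by move: ts; lia.
Qed.

Lemma CP (w : seq 'I_N) s :
  factor X s (size (subst_word Theta w)) = subst_word Theta w ->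
  occ (s + size (subst_word Theta w)) ->
  occ s /\ forall l, cnt (s + size (subst_word Theta w)) l = (cnt s l + count_mem l w)%N.
Proof.
elim: w s => [|l1 w IH] s.
  by rewrite /= addn0 => _ os; split => // l; rewrite addn0.
rewrite sw_cons size_cat factor_add => /eqP; rewrite eqseq_cat ?size_factor //.
case/andP => /eqP E1 /eqP E2; rewrite addnA => o2.
have [o1 C1] := IH _ E2 o2.
have [os ns] := occ_from_rw (esym E1) o1.
split => // l; rewrite C1 cnt_add.
have -> : size (Theta l1) = (nxt s - s)%N by rewrite ns addKn.
rewrite Count_nxt // /typ ns addKn E1 /= -addnA; congr (_ + _)%N.
case: Henum => _ _ Hinj _; rewrite (inj_eq Hinj) eq_sym; by [].
Qed.

Variable tau_u : 'I_N -> seq 'I_N.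
Hypothesis Hsub : return_substitution tau Theta tau_u.

Lemma commute n w : subst_word Theta (iter n (subst_word tau_u) w) =
  iter n sw (subst_word Theta w).
Proof.
have H1 v : subst_word Theta (subst_word tau_u v) = sw (subst_word Theta v).
  elim: v => // k v IH; rewrite !sw_cons sw_cat IH sw_cat.
  by case: (Hsub k) => _ ->.
by elim: n => //= n IH; rewrite H1 IH.
Qed.

Definition F n q l := Count (Qn n q) (Qn n q.+1 - Qn n q) l.

Lemma Qn_le n q : (Qn n q <= Qn n q.+1)%N.
Proof. by rewrite -addn1 Qn_mono leq_addr. Qed.

Lemma tele n i0 d l : cnt (Qn n (i0 + d)) l = (cnt (Qn n i0) l + \sum_(t < d) F n (i0 + t) l)%N.
Proof.
elim: d => [|d IH]; first by rewrite addn0 big_ord0 addn0.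
rewrite big_ord_recr /= addnA -IH addnS /F -cnt_add subnKC //; exact: Qn_le.
Qed.

Lemma backward n k l : exists i0, Theta k = factor X i0 (size (Theta k)) /\
  count_mem l (iter n (subst_word tau_u) [:: k]) = (\sum_(t < size (Theta k)) F n (i0 + t) l)%N.
Proof.
have [i0 [oi E]] := ret_nxt k.
exists i0; have Hd : size (Theta k) = (nxt i0 - i0)%N by rewrite E size_factor.
split; first by rewrite Hd -E.
set w := iter n (subst_word tau_u) [:: k].
have Ew : subst_word Theta w = iter n sw (factor X i0 (size (Theta k))).
  by rewrite commute sw1 {1}Hd -E.
have := factor_iter n i0 (size (Theta k)); rewrite -Ew => Ef.
have Eq := Qn_mono n i0 (size (Theta k)); rewrite -Ew in Eq.
have oe : occ (Qn n i0 + size (subst_word Theta w)).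
  rewrite -Eq; apply: occ_Qn; rewrite Hd subnKC; [exact: nxt_occ | exact: ltnW (nxt_gt i0)].
have [_ C] := CP (esym Ef) oe.
have := C l; rewrite -Eq tele => /eqP; rewrite eqn_add2l => /eqP <- //.
Qed.

Lemma BB s m : (count (fun t => occ (s + t) && (s + m < nxt (s + t) + size u)%N) (iota 0 m)
   <= size u)%N.
Proof.
have u0 : (0 < size u)%N by rewrite lt0n size_eq0.
rewrite -size_filter.
set S := filter _ _.
pose h t := minn (nxt (s + t)) (s + m).
have memS t : t \in S -> [/\ (t < m)%N, occ (s + t) & (s + m < nxt (s + t) + size u)%N].
  by rewrite mem_filter mem_iota => /andP [/andP [o lt] /andP [_ tm]].
have uS : uniq S := filter_uniq _ (iota_uniq 0 m).
have hinj : {in S &, injective h}.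
  move=> t1 t2 /memS [m1 o1 b1] /memS [m2 o2 b2] E.
  case: (ltngtP t1 t2) => // lt.
    have H1 : (s + t1 < s + t2)%N by lia.
    have := nxt_min H1 o2; have := nxt_gt (s + t2); move: E; rewrite /h; lia.
  have H1 : (s + t2 < s + t1)%N by lia.
  have := nxt_min H1 o1; have := nxt_gt (s + t1); move: E; rewrite /h; lia.
have : uniq (map h S) by rewrite map_inj_in_uniq.
move/uniq_leq_size => /(_ (iota (s + m - size u).+1 (s + m - (s + m - size u)))) H.
rewrite -(size_map h); apply: leq_trans (H _) _; last by rewrite size_iota; lia.
move=> y /mapP [t /memS [tm ot bt] ->]; rewrite mem_iota /h.
have := nxt_gt (s + t); lia.
Qed.

Lemma TR s s' m t l : factor X s m = factor X s' m -> (t < m)%N -> occ (s + t) ->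
  (nxt (s + t) + size u <= s + m)%N ->
  [/\ occ (s' + t), (nxt (s' + t) + size u <= s' + m)%N & typ (s + t) l = typ (s' + t) l].
Proof.
move=> E tm ot nb.
have jg := nxt_gt (s + t); have oj := nxt_occ (s + t).
set j := nxt (s + t) in jg oj nb *.
have occT x : (x + size u <= m)%N -> occ (s + x) = occ (s' + x).
  by move=> H; rewrite /occ (@SUBF s s' m x (size u) E H).
have o't : occ (s' + t) by rewrite -occT //; lia.
have n' : nxt (s' + t) = (s' + (j - s))%N.
  apply: nxt_eq; first by lia.
    rewrite -occT; last by lia.
    by rewrite subnKC //; lia.
  move=> x /andP [xa xb].
  have : ~~ occ (s + (x - s')) by apply: (@nxt_none (s + t)); rewrite -/j; lia.
  by rewrite occT ?subnKC //; lia.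
split => //; first by rewrite n'; lia.
rewrite /typ n' -/j.
have -> : (s' + (j - s) - (s' + t) = j - (s + t))%N by lia.
by rewrite (@SUBF s s' m t (j - (s + t)) E) //; lia.
Qed.

Lemma count_le3 (T : eqType) (P Q Rr : pred T) (s : seq T) :
  (forall x, x \in s -> P x -> Q x || Rr x) -> (count P s <= count Q s + count Rr s)%N.
Proof.
elim: s => //= x s IH H.
have Hx := H x (mem_head _ _).
have IH' : (count P s <= count Q s + count Rr s)%N.
  by apply: IH => y ys; apply: H; rewrite in_cons ys orbT.
case: (P x) Hx => [/(_ isT)|_]; case: (Q x); case: (Rr x) => //=; lia.
Qed.

Lemma WIN s s' m l : factor X s m = factor X s' m -> (Count s m l <= Count s' m l + size u)%N.
Proof.
move=> E; rewrite /Count.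
apply: leq_trans (@count_le3 _ _ (fun t => occ (s' + t) && typ (s' + t) l)
   (fun t => occ (s + t) && (s + m < nxt (s + t) + size u)%N) _ _) _.
  move=> t; rewrite mem_iota => /andP [_ tm] /andP [ot ty].
  case: (leqP (nxt (s + t) + size u) (s + m)) => nb.
    by have [o' _ ty'] := TR l E tm ot nb; rewrite /= o' -ty' ty.
  by rewrite /= ot orbT.
by apply: leq_add; [exact: leqnn | exact: BB].
Qed.

Lemma F_win n q q' l : X q = X q' -> (F n q l <= F n q' l + size u)%N.
Proof.
move=> E; rewrite /F.
have W q0 : (Qn n q0.+1 - Qn n q0)%N = size (iter n sw [:: X q0]).
  by rewrite -addn1 Qn_mono addKn factor1.
have Fq q0 : factor X (Qn n q0) (Qn n q0.+1 - Qn n q0) = iter n sw [:: X q0].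
  by rewrite W -factor1; symmetry; exact: factor_iter.
have E1 := Fq q; have E2 := Fq q'; rewrite (W q) in E1; rewrite (W q') -E in E2.
rewrite (W q) (W q') -E; apply: WIN; by rewrite E1 E2.
Qed.

Lemma trX (m : nat) (B : 'M[algC]_m) n : (B^T) ^+ n = (B ^+ n)^T.
Proof.
elim: n => [|n IH]; first by rewrite !expr0 trmx1.
by rewrite exprSr IH exprS -!mulmxE trmx_mul.
Qed.

Lemma sum_bound d (f g : nat -> nat) c : (forall t, f t <= g t + c)%N ->
  (\sum_(t < d) f t <= \sum_(t < d) g t + d * c)%N.
Proof.
move=> H; apply: (@leq_trans (\sum_(t < d) (g t + c))%N).
  by apply: leq_sum => t _; exact: H.
by rewrite big_split /= big_const_ord iter_addn_0 mulnC.
Qed.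

Definition Cb := (R * size u)%N.

Lemma backward_entry n (k l : 'I_#|'I_N|) :
  let G := \matrix_(c, l0) ((F n (qpos (enum_val c)) (enum_val (l0 : 'I_#|'I_N|)))%:R : algC)
   : 'M_(#|A|, #|'I_N|) in
  exists t : 'I_(Cb.*2.+1),
    ((subst_mx tau_u)^T ^+ n) k l - (Lmx^T *m G) k l = (t : nat)%:R - Cb%:R.
Proof.
move=> G.
have [i0 [E Hc]] := backward n (enum_val k) (enum_val l).
set d := size (Theta (enum_val k)) in E Hc.
set S1 := (\sum_(t < d) F n (i0 + t) (enum_val l))%N in Hc.
set S2 := (\sum_(t < d) F n (qpos (X (i0 + t))) (enum_val l))%N.
have dR : (d <= R)%N by exact: (leq_bigmax (enum_val k)).
have duC : (d * size u <= Cb)%N by rewrite /Cb leq_mul2r dR orbT.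
have B1 : (S1 <= S2 + Cb)%N.
  apply: leq_trans (@sum_bound d (fun t => F n (i0 + t) (enum_val l))
     (fun t => F n (qpos (X (i0 + t))) (enum_val l)) (size u) _) _; last by rewrite leq_add2l.
  move=> t; apply: F_win; by rewrite qposE.
have B2 : (S2 <= S1 + Cb)%N.
  apply: leq_trans (@sum_bound d (fun t => F n (qpos (X (i0 + t))) (enum_val l))
     (fun t => F n (i0 + t) (enum_val l)) (size u) _) _; last by rewrite leq_add2l.
  move=> t; apply: F_win; by rewrite qposE.
have Hlt : (S1 + Cb - S2 < Cb.*2.+1)%N by rewrite -addnn; lia.
exists (Ordinal Hlt) => /=.
rewrite trX mxE mxpow Hc -/S1.
have -> : (Lmx^T *m G) k l = S2%:R.
  rewrite !mxE.
  transitivity (\sum_(c < #|A|) (count_mem (enum_val c) (Theta (enum_val k)))%:R *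
     ((F n (qpos (enum_val c)) (enum_val l))%:R : algC)).
    by apply: eq_bigr => c _; rewrite !mxE.
  rewrite -(sumw (fun y => (F n (qpos y) (enum_val l))%:R)) /S2 natr_sum E.
  rewrite /factor /mkseq big_map -(big_mkord xpredT (fun t => (F n (qpos (X (i0 + t))) (enum_val l))%:R)).
  by rewrite /index_iota subn0.
rewrite natrB; last by lia.
rewrite natrD; ring.
Qed.

Lemma backward_mx n : exists G : 'M[algC]_(#|A|, #|'I_N|),
  exists T : 'M['I_(Cb.*2.+1)]_#|'I_N|, (subst_mx tau_u)^T ^+ n = Lmx^T *m G + decm T.
Proof.
pose G := \matrix_(c, l0) ((F n (qpos (enum_val c)) (enum_val (l0 : 'I_#|'I_N|)))%:R : algC)
   : 'M_(#|A|, #|'I_N|).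
have Hent k l : exists t : 'I_(Cb.*2.+1),
    ((subst_mx tau_u)^T ^+ n) k l - (Lmx^T *m G) k l == (t : nat)%:R - Cb%:R.
  by have [t Ht] := backward_entry n k l; exists t; apply/eqP.
exists G, (\matrix_(k, l) xchoose (Hent k l)).
apply/matrixP => k l.
have E := eqP (xchooseP (Hent k l)).
rewrite [RHS]mxE [decm _ k l]mxE [(\matrix_(_, _) _) k l]mxE -E.
by rewrite addrC subrK.
Qed.
End Main.

Lemma eig_tr (m : nat) (g : 'M[algC]_m) (x : algC) : eigenvalue g^T x = eigenvalue g x.
Proof.
rewrite /eigenvalue /eigenspace !kermx_eq0 !row_free_unit -unitmx_tr.
have -> : (g^T - x%:M)^T = g - x%:M by rewrite raddfB /= trmxK tr_scalar_mx.
by [].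
Qed.


Unset Implicit Arguments.

Theorem proposition10 (A : finType) (tau : A -> seq A) (a : A) (X : nat -> A)
  (u : seq A) (N : nat) (Theta : 'I_N -> seq A) (tau_u : 'I_N -> seq 'I_N) :
  (forall b, tau b != [::]) ->
  (exists w, tau a = a :: w) ->
  primitive tau ->
  is_fixed_point tau a X ->
  u != [::] -> u = pref X (size u) ->
  return_enumeration X u Theta ->
  return_substitution tau Theta tau_u ->
  forall lam : algC, lam != 0 -> ~ is_root_of_unity lam ->
    (eigenvalue (subst_mx tau) lam <-> eigenvalue (subst_mx tau_u) lam).
Proof.
move=> Hne Ha Hprim Hfix Hu0 Hu Henum Hsub lam l0 nr.
pose L := Lmx Theta.
have ML : subst_mx tau *m L = L *m subst_mx tau_u.
  apply/matrixP => i j; rewrite !mxE.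
  transitivity (\sum_k subst_mx tau i k * (count_mem (enum_val k) (Theta (enum_val j)))%:R).
    by apply: eq_bigr => k _; rewrite [L k j]mxE.
  rewrite (mxmul_sw (f := tau)); last by move=> i0 k0; rewrite mxE.
  transitivity (\sum_k L i k * (count_mem (enum_val k) (tau_u (enum_val j)))%:R); last first.
    by apply: eq_bigr => k _; rewrite [subst_mx tau_u k j]mxE.
  rewrite (mxmul_sw (f := Theta)); last by move=> i0 k0; rewrite mxE.
  by case: (Hsub (enum_val j)) => _ ->.
split.
  apply: (key l0 nr ML) => n.
  exact: (forward Hne Ha Hprim Hfix Hu0 Hu Henum).
rewrite -eig_tr -[eigenvalue (subst_mx tau) lam]eig_tr.
apply: (key (L := L^T) l0 nr).
  by rewrite -!trmx_mul ML.
move=> n; exact: (backward_mx Hne Ha Hprim Hfix Hu0 Hu Henum Hsub).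
Qed.
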